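(* For any variety $\mathsf{V}$ of $\mathcal{L}$-algebras, the following are equivalent: (1) $\mathsf{V}$ has a guarded deduction theorem. (2) There exist conjunctions of equations $\gamma(x_1,x_2,y_1,y_2,\overline{z})$ and $\varphi(x_1,x_2,y_1,y_2,\overline{z})$ such that for every finitely generated $\mathbf{A}\in\mathsf{V}$ and all $a_1,a_2,b_1,b_2\in A$: there exist $\mathbf{C}\in\mathsf{V}$ and an embedding $e\colon\mathbf{A}\to\mathbf{C}$ with $\mathbf{C}\models\exists\overline{z}.\gamma(e(a_1),e(a_2),e(b_1),e(b_2),\overline{z})$; and $(a_1,a_2)\in\mathrm{Cg}^{\mathbf{A}}(b_1,b_2)$ if and only if for every $\mathbf{B}\in\mathsf{V}$ and every homomorphism $h\colon\mathbf{A}\to\mathbf{B}$, $\mathbf{B}\models\forall\overline{z}.(\gamma\to\varphi)(h(a_1),h(a_2),h(b_1),h(b_2),\overline{z})$.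
   Context: $\mathcal{L}$ is an algebraic first-order language with at least one constant symbol. $\mathsf{V}\models\alpha$ means all members satisfy $\alpha$ under all assignments. $\mathrm{Cg}^{\mathbf{A}}(b_1,b_2)$ is the congruence of $\mathbf{A}$ generated by $(b_1,b_2)$; $\overline{z}$ denotes a finite set of variables. $\mathsf{V}$ has a guarded deduction theorem if there exist conjunctions of equations $\gamma(x_1,x_2,y_1,y_2,\overline{z})$ and $\varphi(x_1,x_2,y_1,y_2,\overline{z})$ such that for every finite set of variables $\overline{w}$ with $\overline{w}\cap\overline{z}=\emptyset$, all terms $s_1,s_2,t_1,t_2$ in variables $\overline{w}$, and every conjunction of equations $\pi(\overline{w})$: (i) $\mathsf{V}\models(\pi\mathbin{\&}t_1\approx t_2)\to s_1\approx s_2$ iff $\mathsf{V}\models\pi\to\forall\overline{z}.(\gamma\to\varphi)(s_1,s_2,t_1,t_2,\overline{z})$; and (ii) for every equation $\sigma(\overline{w})$, $\mathsf{V}\models(\pi\mathbin{\&}\gamma(s_1,s_2,t_1,t_2,\overline{z}))\to\sigma$ iff $\mathsf{V}\models\pi\to\sigma$. *)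

(* Defs.v *)
From mathcomp Require Import all_boot.
From Stdlib Require List.
Unset Printing Implicit Defensive.

Section UA.
Context {F : Type}.
Variable ar : F -> nat.

Inductive term : Type :=
| Var : nat -> term
| App : forall f : F, ('I_(ar f) -> term) -> term.

Record algebra : Type := Algebra {
  carrier : Type;
  op : forall f : F, ('I_(ar f) -> carrier) -> carrier }.
Arguments op : clear implicits.

Fixpoint eval (A : algebra) (v : nat -> carrier A) (t : term) : carrier A :=
  match t with
  | Var x => v x
  | App f args => op A f (fun i => eval A v (args i))
  end.

Fixpoint subst (s : nat -> term) (t : term) : term :=
  match t with
  | Var x => s x
  | App f args => App f (fun i => subst s (args i))
  end.

Fixpoint vars_in (P : nat -> Prop) (t : term) : Prop :=
  match t with
  | Var x => P x
  | App f args => forall i, vars_in P (args i)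
  end.

Definition equation := (term * term)%type.
Definition conj_eq := seq equation.

Definition subst_eq (s : nat -> term) (e : equation) : equation :=
  (subst s e.1, subst s e.2).
Definition subst_conj (s : nat -> term) (c : conj_eq) : conj_eq :=
  map (subst_eq s) c.

Definition eq_vars_in (P : nat -> Prop) (e : equation) : Prop :=
  vars_in P e.1 /\ vars_in P e.2.
Definition conj_vars_in (P : nat -> Prop) (c : conj_eq) : Prop :=
  forall e, List.In e c -> eq_vars_in P e.

Definition sat_eq (A : algebra) (v : nat -> carrier A) (e : equation) : Prop :=
  eval A v e.1 = eval A v e.2.
Definition sat_conj (A : algebra) (v : nat -> carrier A) (c : conj_eq) : Prop :=
  forall e, List.In e c -> sat_eq A v e.

(** A variety is given by a set of defining identities (Birkhoff);
    its members are the algebras satisfying all of them. *)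
Definition variety := equation -> Prop.
Definition in_var (V : variety) (A : algebra) : Prop :=
  forall e, V e -> forall v : nat -> carrier A, sat_eq A v e.

Definition is_hom (A B : algebra) (h : carrier A -> carrier B) : Prop :=
  forall (f : F) (args : 'I_(ar f) -> carrier A),
    h (op A f args) = op B f (fun i => h (args i)).
Definition is_embedding (A B : algebra) (h : carrier A -> carrier B) : Prop :=
  is_hom A B h /\ (forall x y, h x = h y -> x = y).

Inductive generated (A : algebra) (X : carrier A -> Prop) : carrier A -> Prop :=
| gen_base : forall a, X a -> generated A X a
| gen_op : forall (f : F) (args : 'I_(ar f) -> carrier A),
    (forall i, generated A X (args i)) -> generated A X (op A f args).

Definition fin_gen (A : algebra) : Prop :=
  exists gs : seq (carrier A), forall a, generated A (fun x => List.In x gs) a.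

Definition is_congruence (A : algebra) (R : carrier A -> carrier A -> Prop) : Prop :=
  [/\ (forall x, R x x), (forall x y, R x y -> R y x),
      (forall x y z, R x y -> R y z -> R x z) &
      (forall (f : F) (a b : 'I_(ar f) -> carrier A),
          (forall i, R (a i) (b i)) -> R (op A f a) (op A f b))].

Definition Cg (A : algebra) (b1 b2 : carrier A) (x y : carrier A) : Prop :=
  forall R, is_congruence A R -> R b1 b2 -> R x y.

(** Variable conventions for gamma(x1,x2,y1,y2,zbar), phi(x1,x2,y1,y2,zbar):
    x1 = var 0, x2 = var 1, y1 = var 2, y2 = var 3, and zbar = the finite
    list zs of variables, all > 3. *)
Definition gp_shape (zs : seq nat) (gam phi : conj_eq) : Prop :=
  [/\ (forall z, List.In z zs -> 3 < z),
      conj_vars_in (fun n => n <= 3 \/ List.In n zs) gam &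
      conj_vars_in (fun n => n <= 3 \/ List.In n zs) phi].

Definition sub4 (s1 s2 t1 t2 : term) : nat -> term :=
  fun n => match n with
           | 0 => s1 | 1 => s2 | 2 => t1 | 3 => t2 | _ => Var n end.

Definition asg4 (A : algebra) (p q r s : carrier A) (c : nat -> carrier A)
  : nat -> carrier A :=
  fun n => match n with
           | 0 => p | 1 => q | 2 => r | 3 => s | _ => c n end.

Definition update (A : algebra) (v c : nat -> carrier A) (zs : seq nat)
  : nat -> carrier A :=
  fun n => if n \in zs then c n else v n.

(** V |= (pi & t1 = t2) -> s1 = s2  iff
    V |= pi -> forall zbar. (gam -> phi)(s1,s2,t1,t2,zbar), and (ii). *)
Definition guarded_deduction_theorem (V : variety) : Prop :=
  exists (zs : seq nat) (gam phi : conj_eq), gp_shape zs gam phi /\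
  forall ws : seq nat, (forall w, List.In w ws -> ~ List.In w zs) ->
  let inws := fun n => List.In n ws in
  forall s1 s2 t1 t2 : term,
    vars_in inws s1 -> vars_in inws s2 -> vars_in inws t1 -> vars_in inws t2 ->
  forall pi : conj_eq, conj_vars_in inws pi ->
  let gam' := subst_conj (sub4 s1 s2 t1 t2) gam in
  let phi' := subst_conj (sub4 s1 s2 t1 t2) phi in
  ((forall A, in_var V A -> forall v : nat -> carrier A,
       sat_conj A v pi -> sat_eq A v (t1, t2) -> sat_eq A v (s1, s2))
   <->
   (forall A, in_var V A -> forall v : nat -> carrier A,
       sat_conj A v pi ->
       forall c : nat -> carrier A,
         sat_conj A (update A v c zs) gam' -> sat_conj A (update A v c zs) phi'))
  /\
  (forall sg : equation, eq_vars_in inws sg ->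
    ((forall A, in_var V A -> forall v : nat -> carrier A,
        sat_conj A v pi -> sat_conj A v gam' -> sat_eq A v sg)
     <->
     (forall A, in_var V A -> forall v : nat -> carrier A,
        sat_conj A v pi -> sat_eq A v sg))).

Definition semantic_condition (V : variety) : Prop :=
  exists (zs : seq nat) (gam phi : conj_eq), gp_shape zs gam phi /\
  forall A : algebra, in_var V A -> fin_gen A ->
  forall a1 a2 b1 b2 : carrier A,
    (exists (C : algebra) (e : carrier A -> carrier C),
        [/\ in_var V C, is_embedding A C e &
            exists c : nat -> carrier C,
              sat_conj C (asg4 C (e a1) (e a2) (e b1) (e b2) c) gam])
    /\
    (Cg A b1 b2 a1 a2 <->
     (forall (B : algebra) (h : carrier A -> carrier B),
         in_var V B -> is_hom A B h ->
         forall c : nat -> carrier B,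
           sat_conj B (asg4 B (h a1) (h a2) (h b1) (h b2) c) gam ->
           sat_conj B (asg4 B (h a1) (h a2) (h b1) (h b2) c) phi)).

End UA.

(* Main.v *)
Require Import Defs.
From mathcomp Require Import all_boot.
From Stdlib Require List.
From Stdlib Require Import ClassicalEpsilon FunctionalExtensionality PropExtensionality ProofIrrelevance.

Section Gen.
Context {F : Type} (ar : F -> nat).
Local Notation tm := (term ar).
Local Notation alg := (algebra ar).
Local Notation car := (carrier ar).

Lemma InP (T : eqType) (x : T) (s : seq T) : List.In x s <-> x \in s.
Proof.
elim: s => [|y s IH] /=; first by split.
rewrite in_cons; split.
- case=> [->|/IH ->]; first by rewrite eqxx. by rewrite orbT.
- case/orP=> [/eqP ->|/IH]; by [left|right].
Qed.

Lemma In_smap (A B : Type) (f : A -> B) (s : seq A) y :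
  List.In y (map f s) <-> exists x, List.In x s /\ y = f x.
Proof.
elim: s => [|x s IH] /=; first by split=> // [[x []]].
split.
- case=> [<-|/IH [z [Hz ->]]]; [by exists x; split; [left|]| by exists z; split; [right|]].
- case=> z [[E|Hz] Ey]; first by left; rewrite Ey E.
  right; apply IH; by exists z.
Qed.

Lemma eval_subst (A : alg) v s t :
  eval ar A v (subst ar s t) = eval ar A (fun n => eval ar A v (s n)) t.
Proof.
elim: t => [n|f args IH] //=; congr (op ar A f); apply: functional_extensionality => i; exact: IH.
Qed.

Lemma eval_agree (A : alg) (P : nat -> Prop) v w t :
  vars_in ar P t -> (forall n, P n -> v n = w n) -> eval ar A v t = eval ar A w t.
Proof.
elim: t => [n|f args IH] /= Hv Hvw; first exact: Hvw.
congr (op ar A f); apply: functional_extensionality => i; exact: IH.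
Qed.

Lemma vars_in_mono (P Q : nat -> Prop) t :
  (forall n, P n -> Q n) -> vars_in ar P t -> vars_in ar Q t.
Proof. elim: t => [n|f args IH] /= HPQ H; [exact: HPQ | move=> i; exact: IH]. Qed.

Lemma hom_eval (A B : alg) h v t : is_hom ar A B h ->
  h (eval ar A v t) = eval ar B (fun n => h (v n)) t.
Proof.
move=> Hh; elim: t => [n|f args IH] //=; rewrite Hh; congr (op ar B f).
apply: functional_extensionality => i; exact: IH.
Qed.

Definition TermAlg : alg := Algebra ar tm (App ar).

Lemma eval_T v t : eval ar TermAlg v t = subst ar v t.
Proof.
elim: t => [n|f args IH] //=; congr (App ar f); apply: functional_extensionality => i; exact: IH.
Qed.

Lemma eval_T_Var t : eval ar TermAlg (Var ar) t = t.
Proof.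
elim: t => [n|f args IH] //=; congr (App ar f); apply: functional_extensionality => i; exact: IH.
Qed.

Lemma kernel_cong (A B : alg) h : is_hom ar A B h -> is_congruence ar A (fun x y => h x = h y).
Proof.
move=> Hh; split => //; first by move=> x y z -> ->.
move=> f a b Hab; rewrite !Hh; congr (op ar B f); exact: functional_extensionality.
Qed.

Section Quot.
Variables (A : alg) (R : car A -> car A -> Prop) (HR : is_congruence ar A R).

Definition qcar := {P : car A -> Prop | exists x, P = R x}.
Definition qcl (x : car A) : qcar := exist _ (R x) (ex_intro _ x erefl).
Definition qrep (q : qcar) : car A :=
  proj1_sig (constructive_indefinite_description _ (proj2_sig q)).

Lemma qrepK q : qcl (qrep q) = q.
Proof.
rewrite /qrep; case: (constructive_indefinite_description _ _) => x Hx /=.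
move: Hx; case: q => P pf /= HP; subst P; rewrite /qcl; f_equal; apply: proof_irrelevance.
Qed.

Lemma qcl_eq x y : qcl x = qcl y <-> R x y.
Proof.
case: HR => Hr Hs Ht _.
split.
- move=> /(f_equal (@proj1_sig _ _)) /= E; rewrite E; exact: Hr.
- move=> Hxy; rewrite /qcl.
  have E : R x = R y.
    apply: functional_extensionality => z; apply: propositional_extensionality.
    split=> H; [apply: Ht (Hs _ _ Hxy) H | exact: Ht Hxy H].
  move: (ex_intro _ x _); rewrite E => pf; f_equal; apply: proof_irrelevance.
Qed.

Lemma qrep_R x : R (qrep (qcl x)) x.
Proof. apply/qcl_eq; exact: qrepK. Qed.

Definition qop (f : F) (args : 'I_(ar f) -> qcar) : qcar :=
  qcl (op ar A f (fun i => qrep (args i))).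

Definition QAlg : alg := Algebra ar qcar qop.

Lemma qcl_hom : is_hom ar A QAlg qcl.
Proof.
move=> f args /=; rewrite /qop; apply/qcl_eq.
case: HR => Hr Hs Ht Hc; apply: Hc => i; apply: Hs; exact: qrep_R.
Qed.

Lemma eval_Q v t : eval ar QAlg (fun n => qcl (v n)) t = qcl (eval ar A v t).
Proof. by rewrite (hom_eval _ _ _ _ _ qcl_hom). Qed.

Lemma in_var_Q V : (forall e, V e -> forall v, R (eval ar A v e.1) (eval ar A v e.2)) ->
  in_var ar V QAlg.
Proof.
move=> HV e He a; rewrite /sat_eq.
have -> : a = fun n => qcl (qrep (a n)).
  apply: functional_extensionality => n; by rewrite qrepK.
rewrite !eval_Q; apply/qcl_eq; exact: HV.
Qed.

End Quot.

Lemma sat_agree (B : alg) (P : nat -> Prop) v w pi :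
  conj_vars_in ar P pi -> (forall n, P n -> v n = w n) ->
  sat_conj ar B v pi -> sat_conj ar B w pi.
Proof.
move=> Hp Hvw Hs e He; case: (Hp e He) => H1 H2; move: (Hs e He); rewrite /sat_eq.
by rewrite (eval_agree _ _ _ _ _ H1 Hvw) (eval_agree _ _ _ _ _ H2 Hvw).
Qed.

Lemma sat_app (B : alg) v p1 p2 :
  sat_conj ar B v (List.app p1 p2) <-> sat_conj ar B v p1 /\ sat_conj ar B v p2.
Proof.
split.
- move=> H; split=> e He; apply: H; apply List.in_or_app; by [left|right].
- move=> [H1 H2] e He; case: (List.in_app_or _ _ _ He) => He'; [exact: H1|exact: H2].
Qed.

Lemma Ltrans (B : alg) (zs : seq nat) (P : nat -> Prop) (X : conj_eq ar) w c s1 s2 t1 t2 p q r s :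
  (forall z, List.In z zs -> 3 < z) ->
  conj_vars_in ar (fun n => n <= 3 \/ List.In n zs) X ->
  (forall n, P n -> ~ List.In n zs) ->
  vars_in ar P s1 -> vars_in ar P s2 -> vars_in ar P t1 -> vars_in ar P t2 ->
  eval ar B w s1 = p -> eval ar B w s2 = q -> eval ar B w t1 = r -> eval ar B w t2 = s ->
  (sat_conj ar B (update ar B w c zs) (subst_conj ar (sub4 ar s1 s2 t1 t2) X) <->
   sat_conj ar B (asg4 ar B p q r s c) X).
Proof.
move=> Hz HX HP H1 H2 H3 H4 E1 E2 E3 E4.
have Hup : forall n, P n -> update ar B w c zs n = w n.
  move=> n Pn; rewrite /update; case: ifP => // /InP Hn; by case: (HP n Pn).
have key : forall l, vars_in ar (fun n => n <= 3 \/ List.In n zs) l ->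
    eval ar B (update ar B w c zs) (subst ar (sub4 ar s1 s2 t1 t2) l) = eval ar B (asg4 ar B p q r s c) l.
  move=> l Hl; rewrite eval_subst; apply: (eval_agree _ _ _ _ _ Hl).
  move=> [|[|[|[|n]]]] /= Hn.
  - by rewrite -E1; apply: eval_agree H1 Hup.
  - by rewrite -E2; apply: eval_agree H2 Hup.
  - by rewrite -E3; apply: eval_agree H3 Hup.
  - by rewrite -E4; apply: eval_agree H4 Hup.
  - case: Hn => // Hn; rewrite /update; by move/InP: Hn => ->.
split.
- move=> H e He; case: (HX e He) => Hl Hr.
  have := H (subst_eq ar (sub4 ar s1 s2 t1 t2) e).
  rewrite /sat_eq /subst_eq /= !key //; apply; apply/In_smap; by exists e.
- move=> H e /In_smap [e' [He' ->]]; case: (HX e' He') => Hl Hr.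
  rewrite /sat_eq /subst_eq /= !key //; exact: H.
Qed.

Section Theta.
Variables (V : variety ar) (A : alg) (g : nat -> car A) (ws : seq nat) (X : conj_eq ar).
Local Notation inws := (fun n => List.In n ws).
Definition Dg pi := conj_vars_in ar inws pi /\ sat_conj ar A g pi.
Definition theta (u v : tm) := exists pi, Dg pi /\
  forall B, in_var ar V B -> forall w, sat_conj ar B w pi -> sat_conj ar B w X -> sat_eq ar B w (u, v).

Lemma theta_cong : is_congruence ar TermAlg theta.
Proof.
split.
- move=> x; exists nil; split; first by split=> e [].
  by move=> *.
- move=> x y [pi [Hd H]]; exists pi; split=> // B HB w H1 H2; symmetry; exact: H.
- move=> x y z [p1 [[Hv1 Hs1] H1]] [p2 [[Hv2 Hs2] H2]]; exists (List.app p1 p2); split.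
  + split; first by move=> e He; case: (List.in_app_or _ _ _ He) => He'; [exact: Hv1|exact: Hv2].
    by apply/sat_app.
  + move=> B HB w /sat_app [S1 S2] HXw; rewrite /sat_eq /=.
    by rewrite (H1 B HB w S1 HXw) (H2 B HB w S2 HXw).
- move=> f a b Hab.
  pose pis i := proj1_sig (constructive_indefinite_description _ (Hab i)).
  have Hpis i : Dg (pis i) /\ forall B, in_var ar V B -> forall w, sat_conj ar B w (pis i) ->
      sat_conj ar B w X -> sat_eq ar B w (a i, b i).
    exact: (proj2_sig (constructive_indefinite_description _ (Hab i))).
  have Hin : forall i e, List.In e (pis i) -> List.In e (List.concat (List.map pis (enum 'I_(ar f)))).
    move=> i e He; apply List.in_concat; exists (pis i); split => //.
    apply List.in_map; apply/InP; exact: mem_enum.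
  exists (List.concat (List.map pis (enum 'I_(ar f)))); split.
  + split.
    * move=> e /List.in_concat [l [/List.in_map_iff [i [<- _]] He]].
      exact: (proj1 (proj1 (Hpis i))).
    * move=> e /List.in_concat [l [/List.in_map_iff [i [<- _]] He]].
      exact: (proj2 (proj1 (Hpis i))).
  + move=> B HB w Hw HXw; rewrite /sat_eq /=; congr (op ar B f).
    apply: functional_extensionality => i; apply: (proj2 (Hpis i)) => // e He.
    apply: Hw; exact: Hin He.
Qed.

Lemma theta_V e : V e -> forall v, theta (eval ar TermAlg v e.1) (eval ar TermAlg v e.2).
Proof.
move=> He v; exists nil; split; first by split=> ? [].
move=> B HB w _ _; rewrite /sat_eq /= !eval_T !eval_subst; exact: HB.
Qed.

Lemma theta_in_var : in_var ar V (QAlg TermAlg theta).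
Proof. apply: (in_var_Q _ _ theta_cong) => e He v; exact: theta_V. Qed.

Variable Hgen : forall x, exists t, vars_in ar inws t /\ eval ar A g t = x.
Definition tr x := proj1_sig (constructive_indefinite_description _ (Hgen x)).
Lemma trP x : vars_in ar inws (tr x) /\ eval ar A g (tr x) = x.
Proof. exact: (proj2_sig (constructive_indefinite_description _ (Hgen x))). Qed.
Definition hA x := qcl TermAlg theta (tr x).

Lemma hA_eval t : vars_in ar inws t -> hA (eval ar A g t) = qcl TermAlg theta t.
Proof.
move=> Ht; apply/(qcl_eq _ _ theta_cong); exists [:: (tr (eval ar A g t), t)]; split.
- split=> e [<-|[]]; first by split=> //; exact: (proj1 (trP _)).
  by rewrite /sat_eq /= (proj2 (trP _)).
- move=> B HB w Hw _; apply: Hw; by left.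
Qed.

Lemma hA_hom : is_hom ar A (QAlg TermAlg theta) hA.
Proof.
move=> f args.
have E : op ar A f args = eval ar A g (App ar f (fun i => tr (args i))).
  rewrite /=; congr (op ar A f); apply: functional_extensionality => i; by rewrite (proj2 (trP _)).
rewrite E hA_eval; last by move=> i; exact: (proj1 (trP _)).
have -> : App ar f (fun i => tr (args i)) = op ar TermAlg f (fun i => tr (args i)) by [].
by rewrite (qcl_hom _ _ theta_cong).
Qed.

Lemma theta_collect (sg : nat -> tm) (Y : conj_eq ar) :
  (forall e, List.In e Y -> theta (subst ar sg e.1) (subst ar sg e.2)) ->
  exists pi, Dg pi /\ forall B, in_var ar V B -> forall w, sat_conj ar B w pi ->
    sat_conj ar B w X -> sat_conj ar B w (subst_conj ar sg Y).
Proof.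
elim: Y => [|e Y IH] H.
- exists nil; split; first by split=> ? [].
  by move=> B _ w _ _ ? [].
- have [p1 [[Hv1 Hs1] H1]] := H e (or_introl erefl).
  have [p2 [[Hv2 Hs2] H2]] : exists pi, Dg pi /\ forall B, in_var ar V B -> forall w, sat_conj ar B w pi ->
    sat_conj ar B w X -> sat_conj ar B w (subst_conj ar sg Y).
    apply: IH => e' He'; apply: H; by right.
  exists (List.app p1 p2); split.
  + split; first by move=> e' He; case: (List.in_app_or _ _ _ He) => He'; [exact: Hv1|exact: Hv2].
    by apply/sat_app.
  + move=> B HB w /sat_app [S1 S2] HXw e' [<-|He']; first exact: H1.
    exact: H2.
Qed.

End Theta.

Lemma upd_agree (B : alg) (P : nat -> Prop) zs v c :
  (forall n, P n -> ~ List.In n zs) -> forall n, P n -> update ar B v c zs n = v n.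
Proof. move=> HP n Pn; rewrite /update; case: ifP => // /InP Hn; by case: (HP n Pn). Qed.

Lemma In_le_sumn z zs : List.In z zs -> z <= sumn zs.
Proof.
elim: zs => [|x zs IH] //= [<-|H]; first exact: leq_addr.
apply: leq_trans (IH H) _; exact: leq_addl.
Qed.

Lemma dir12 (V : variety ar) : guarded_deduction_theorem ar V -> semantic_condition ar V.
Proof.
move=> [zs [gam [phi [Hsh HG]]]]; exists zs, gam, phi; split => //.
move=> A HA [gs Hgs] a1 a2 b1 b2.
case: Hsh => Hz Hgam Hphi.
pose m := (sumn zs).+1.
pose ws := List.map (fun i => m + i) (List.seq 0 (length gs)).
pose g := fun n => List.nth (n - m) gs a1.
have Hws : forall w, List.In w ws -> ~ List.In w zs.
  move=> w /List.in_map_iff [i [<- _]] Hin.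
  have H := In_le_sumn _ _ Hin.
  have := leq_trans (leq_addr i m) H; by rewrite /m ltnn.
have Hgen : forall x, exists t, vars_in ar (fun n => List.In n ws) t /\ eval ar A g t = x.
  move=> x; elim: (Hgs x) => {x} [x Hx | f args _ IH].
  - case: (List.In_nth _ _ a1 Hx) => i [Hi Ei].
    exists (Var ar (m + i)); split.
    + apply List.in_map; apply List.in_seq; split; [exact: le_0_n | exact: Hi].
    + by rewrite /= /g addKn.
  - pose ts i := proj1_sig (constructive_indefinite_description _ (IH i)).
    have Hts i : vars_in ar (fun n => List.In n ws) (ts i) /\ eval ar A g (ts i) = args i.
      exact: (proj2_sig (constructive_indefinite_description _ (IH i))).
    exists (App ar f ts); split; first by move=> i; exact: (proj1 (Hts i)).
    rewrite /=; congr (op ar A f); apply: functional_extensionality => i; exact: (proj2 (Hts i)).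
have [s1 [Hs1 Es1]] := Hgen a1.
have [s2 [Hs2 Es2]] := Hgen a2.
have [t1 [Ht1 Et1]] := Hgen b1.
have [t2 [Ht2 Et2]] := Hgen b2.
have HG' := HG ws Hws s1 s2 t1 t2 Hs1 Hs2 Ht1 Ht2.
pose gam' := subst_conj ar (sub4 ar s1 s2 t1 t2) gam.
pose th := theta V A g ws gam'.
have thC : is_congruence ar TermAlg th by exact: theta_cong.
pose Q := QAlg TermAlg th.
pose hQ := hA V A g ws gam' Hgen.
pose c := fun n => qcl TermAlg th (Var ar n).
have Hasg : asg4 ar Q (hQ a1) (hQ a2) (hQ b1) (hQ b2) c =
    fun n => qcl TermAlg th (sub4 ar s1 s2 t1 t2 n).
  apply: functional_extensionality => -[|[|[|[|n]]]] //=.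
  - by rewrite /hQ -Es1 hA_eval.
  - by rewrite /hQ -Es2 hA_eval.
  - by rewrite /hQ -Et1 hA_eval.
  - by rewrite /hQ -Et2 hA_eval.
have evQ : forall t, eval ar Q (fun n => qcl TermAlg th (sub4 ar s1 s2 t1 t2 n)) t =
    qcl TermAlg th (subst ar (sub4 ar s1 s2 t1 t2) t).
  by move=> t; rewrite (eval_Q _ _ thC) eval_T.
have HgamQ : sat_conj ar Q (asg4 ar Q (hQ a1) (hQ a2) (hQ b1) (hQ b2) c) gam.
  rewrite Hasg => e He; rewrite /sat_eq !evQ; apply/(qcl_eq _ _ thC).
  exists nil; split; first by split=> ? [].
  move=> B _ w _ Hg'; apply: (Hg' (subst_eq ar (sub4 ar s1 s2 t1 t2) e)).
  apply/In_smap; by exists e.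
split.
- exists Q, hQ; split; first exact: theta_in_var.
  + split; first exact: hA_hom.
    move=> x y E.
    rewrite -(proj2 (trP _ _ _ Hgen x)) -(proj2 (trP _ _ _ Hgen y)).
    have [pi [[Hpv Hps] Hc]] := (proj1 (qcl_eq _ _ thC _ _) E).
    have [_ Hii] := HG' pi Hpv.
    have Hsg : eq_vars_in ar (fun n => List.In n ws) (tr A g ws Hgen x, tr A g ws Hgen y).
      split; [exact: (proj1 (trP _ _ _ Hgen x)) | exact: (proj1 (trP _ _ _ Hgen y))].
    exact: (proj1 (Hii _ Hsg) Hc A HA g Hps).
  + by exists c.
split.
- move=> Hcg.
  pose X2 := [:: (t1, t2)].
  pose th2 := theta V A g ws X2.
  have th2C : is_congruence ar TermAlg th2 by exact: theta_cong.
  pose h2 := hA V A g ws X2 Hgen.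
  have Hk := kernel_cong _ _ _ (hA_hom V A g ws X2 Hgen).
  have Hb : h2 b1 = h2 b2.
    rewrite /h2 -Et1 -Et2 !hA_eval //; apply/(qcl_eq _ _ th2C).
    exists nil; split; first by split=> ? [].
    move=> B _ w _ HX; apply: HX; by left.
  have H2 : h2 (eval ar A g s1) = h2 (eval ar A g s2) by rewrite Es1 Es2; exact: Hcg _ Hk Hb.
  move: H2; rewrite /h2 !hA_eval // => /(qcl_eq _ _ th2C) [pi [[Hpv Hps] Hc]].
  have [[Hi _] _] := HG' pi Hpv.
  have Hall := Hi (fun B HB w Hw Ht => Hc B HB w Hw (fun e He => match He with or_introl E => eq_ind _ (fun e => sat_eq ar B w e) Ht _ E | or_intror F => False_ind _ F end)).
  move=> B h HB Hh c' Hgm.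
  have Hpi' : sat_conj ar B (fun n => h (g n)) pi.
    move=> e He; rewrite /sat_eq -!(hom_eval _ _ _ _ _ Hh); congr h; exact: Hps.
  have E1 : forall t x, eval ar A g t = x -> eval ar B (fun n => h (g n)) t = h x.
    by move=> t x <-; rewrite (hom_eval _ _ _ _ _ Hh).
  have LT := Ltrans B zs (fun n => List.In n ws) phi (fun n => h (g n)) c' s1 s2 t1 t2 _ _ _ _ Hz Hphi Hws Hs1 Hs2 Ht1 Ht2 (E1 _ _ Es1) (E1 _ _ Es2) (E1 _ _ Et1) (E1 _ _ Et2).
  apply (proj1 LT); apply: (Hall B HB _ Hpi' c').
  by apply/(Ltrans B zs (fun n => List.In n ws) gam (fun n => h (g n)) c' s1 s2 t1 t2 _ _ _ _ Hz Hgam Hws Hs1 Hs2 Ht1 Ht2 (E1 _ _ Es1) (E1 _ _ Es2) (E1 _ _ Et1) (E1 _ _ Et2)).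
- move=> Hhyp.
  have := Hhyp Q hQ (theta_in_var _ _ _ _ _) (hA_hom _ _ _ _ _ _) c HgamQ.
  rewrite Hasg => Hph.
  have [pi [[Hpv Hps] Hc]] : exists pi, Dg A g ws pi /\ forall B, in_var ar V B -> forall w, sat_conj ar B w pi ->
    sat_conj ar B w gam' -> sat_conj ar B w (subst_conj ar (sub4 ar s1 s2 t1 t2) phi).
    apply: theta_collect => e He; apply/(qcl_eq _ _ thC); have := Hph e He; by rewrite /sat_eq !evQ.
  have [[_ Hi] _] := HG' pi Hpv.
  have Himp : forall B, in_var ar V B -> forall v, sat_conj ar B v pi -> sat_eq ar B v (t1, t2) -> sat_eq ar B v (s1, s2).
    apply: Hi => B HB v Hv c' Hg'; apply: Hc => //.
    apply: (sat_agree B (fun n => List.In n ws) v) => //.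
    move=> n Hn; symmetry; exact: upd_agree Hws n Hn.
  move=> R HR Hb.
  have HAR : in_var ar V (QAlg A R).
    apply: (in_var_Q _ _ HR) => e He v; rewrite (HA e He v); by case: HR.
  have := Himp _ HAR (fun n => qcl A R (g n)).
  rewrite /sat_eq !(eval_Q _ _ HR) Es1 Es2 Et1 Et2 => H.
  apply/(qcl_eq _ _ HR); apply: H; last by apply/(qcl_eq _ _ HR).
  move=> e He; rewrite /sat_eq !(eval_Q _ _ HR); congr (qcl A R); exact: Hps.
Qed.


Section Pres.
Variables (V : variety ar) (ws : seq nat) (pi : conj_eq ar) (f0 : F) (Hf0 : ar f0 = 0).
Local Notation inws := (fun n => List.In n ws).
Hypothesis Hpv : conj_vars_in ar inws pi.

Definition kt : tm := App ar f0 (fun _ => Var ar 0).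

Lemma kt_indep (B : alg) v w : eval ar B v kt = eval ar B w kt.
Proof.
rewrite /=; congr (op ar B f0); apply: functional_extensionality => -[j Hj].
exfalso; move: Hj; by rewrite Hf0.
Qed.

Definition th0 (u v : tm) := forall B, in_var ar V B -> forall w,
  (forall n, ~ List.In n ws -> w n = eval ar B w kt) -> sat_conj ar B w pi -> sat_eq ar B w (u, v).

Lemma th0_cong : is_congruence ar TermAlg th0.
Proof.
split.
- by move=> x B _ w _ _.
- move=> x y H B HB w H1 H2; symmetry; exact: H.
- move=> x y z H1 H2 B HB w Hw Hp; rewrite /sat_eq /=.
  by rewrite (H1 B HB w Hw Hp) (H2 B HB w Hw Hp).
- move=> f a b Hab B HB w Hw Hp; rewrite /sat_eq /=; congr (op ar B f).
  apply: functional_extensionality => i; exact: Hab.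
Qed.

Definition PA := QAlg TermAlg th0.

Lemma PA_in_var : in_var ar V PA.
Proof.
apply: (in_var_Q _ _ th0_cong) => e He v B HB w _ _.
rewrite /sat_eq /= !eval_T !eval_subst; exact: HB.
Qed.

Lemma PA_fg : fin_gen ar PA.
Proof.
exists (List.map (fun n => qcl TermAlg th0 (Var ar n)) ws) => x.
rewrite -(qrepK _ _ x).
elim: (qrep TermAlg th0 x) => [n|f us IH].
- case Hn: (n \in ws).
  + apply: gen_base; apply (List.in_map (fun m => qcl TermAlg th0 (Var ar m))); exact/InP.
  + have -> : qcl TermAlg th0 (Var ar n) = qcl TermAlg th0 kt.
      apply/(qcl_eq _ _ th0_cong) => B HB w Hw _; apply: Hw => /InP; by rewrite Hn.
    rewrite /kt.
    have -> : App ar f0 (fun _ => Var ar 0) = op ar TermAlg f0 (fun _ => Var ar 0) by [].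
    rewrite (qcl_hom _ _ th0_cong); apply: gen_op => -[j Hj]; exfalso; move: Hj; by rewrite Hf0.
- have -> : App ar f us = op ar TermAlg f us by [].
  rewrite (qcl_hom _ _ th0_cong); exact: gen_op.
Qed.

Lemma evPA t : eval ar PA (fun n => qcl TermAlg th0 (Var ar n)) t = qcl TermAlg th0 t.
Proof. by rewrite (eval_Q _ _ th0_cong) eval_T_Var. Qed.

Lemma pi_cl e : List.In e pi -> qcl TermAlg th0 e.1 = qcl TermAlg th0 e.2.
Proof. case: e => l r He; apply/(qcl_eq _ _ th0_cong) => B HB w _ Hp; exact: (Hp _ He). Qed.

Lemma evh (B : alg) h t : is_hom ar PA B h ->
  eval ar B (fun n => h (qcl TermAlg th0 (Var ar n))) t = h (qcl TermAlg th0 t).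
Proof. by move=> Hh; rewrite -(hom_eval _ _ _ _ _ Hh) evPA. Qed.

Lemma pi_h (B : alg) h : is_hom ar PA B h -> sat_conj ar B (fun n => h (qcl TermAlg th0 (Var ar n))) pi.
Proof. move=> Hh e He; rewrite /sat_eq !evh // (pi_cl _ He) //. Qed.

Definition adj (B : alg) (v : nat -> car B) : nat -> car B :=
  fun n => if n \in ws then v n else eval ar B v kt.

Lemma adj_ok (B : alg) v n : ~ List.In n ws -> adj B v n = eval ar B (adj B v) kt.
Proof.
move=> Hn; rewrite /adj; case: ifP => [/InP //|_]; exact: kt_indep.
Qed.

Lemma adj_agree (B : alg) v n : List.In n ws -> adj B v n = v n.
Proof. by move=> /InP Hn; rewrite /adj Hn. Qed.

Lemma adj_pi (B : alg) v : sat_conj ar B v pi -> sat_conj ar B (adj B v) pi.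
Proof.
apply: (sat_agree B inws) => // n Hn; symmetry; exact: adj_agree.
Qed.

Definition hv (B : alg) (v : nat -> car B) (x : qcar TermAlg th0) := eval ar B (adj B v) (qrep TermAlg th0 x).

Lemma hv_cl (B : alg) v u : in_var ar V B -> sat_conj ar B v pi ->
  hv B v (qcl TermAlg th0 u) = eval ar B (adj B v) u.
Proof.
move=> HB Hv; rewrite /hv; apply: (qrep_R _ _ th0_cong u B HB) => //.
  exact: adj_ok.
exact: adj_pi.
Qed.

Lemma hv_cl_ws (B : alg) v u : in_var ar V B -> sat_conj ar B v pi -> vars_in ar inws u ->
  hv B v (qcl TermAlg th0 u) = eval ar B v u.
Proof.
move=> HB Hv Hu; rewrite hv_cl //; apply: (eval_agree B inws) => // n Hn; exact: adj_agree.
Qed.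

Lemma hv_hom (B : alg) v : in_var ar V B -> sat_conj ar B v pi -> is_hom ar PA B (hv B v).
Proof.
move=> HB Hv f args.
rewrite {1}/op /= /qop.
have -> : op ar TermAlg f (fun i => qrep TermAlg th0 (args i)) = App ar f (fun i => qrep TermAlg th0 (args i)) by [].
rewrite hv_cl //= /hv; done.
Qed.

End Pres.

Lemma dir21 (V : variety ar) (f0 : F) : ar f0 = 0 -> semantic_condition ar V -> guarded_deduction_theorem ar V.
Proof.
move=> Hf0 [zs [gam [phi [Hsh HS]]]]; exists zs, gam, phi; split => //.
case: Hsh => Hz Hgam Hphi.
move=> ws Hws /= s1 s2 t1 t2 Hs1 Hs2 Ht1 Ht2 pi Hpv /=.
pose th := th0 V ws pi f0.
have thC : is_congruence ar TermAlg th by exact: th0_cong.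
pose A := PA V ws pi f0.
have [Ha Hb] := HS A (PA_in_var _ _ _ _) (PA_fg _ _ _ _ Hf0)
   (qcl TermAlg th s1) (qcl TermAlg th s2) (qcl TermAlg th t1) (qcl TermAlg th t2).
split.
- split.
  + move=> Himp B HB v Hv c Hg'.
    have Hh := hv_hom _ _ _ _ Hf0 Hpv B v HB Hv.
    have E : forall u, vars_in ar (fun n => List.In n ws) u -> eval ar B v u = hv V ws pi f0 B v (qcl TermAlg th u).
      by move=> u Hu; rewrite (hv_cl_ws _ _ _ _ Hf0 Hpv).
    have Hcg : Cg ar A (qcl TermAlg th t1) (qcl TermAlg th t2) (qcl TermAlg th s1) (qcl TermAlg th s2).
      move=> R HR Hbr.
      have HPR : in_var ar V (QAlg A R).
        apply: (in_var_Q _ _ HR) => e He w; rewrite (PA_in_var _ _ _ _ e He w); by case: HR.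
      have := Himp _ HPR (fun n => qcl A R (qcl TermAlg th (Var ar n))).
      rewrite /sat_eq !(eval_Q _ _ HR) !evPA => H.
      apply/(qcl_eq _ _ HR); apply: H; last by apply/(qcl_eq _ _ HR).
      move=> e He; rewrite /sat_eq !(eval_Q _ _ HR) !evPA (pi_cl _ _ _ _ _ He) //.
    have := proj1 Hb Hcg B _ HB Hh c.
    rewrite -!E // => H.
    apply/(Ltrans B zs (fun n => List.In n ws) phi v c s1 s2 t1 t2 _ _ _ _ Hz Hphi Hws Hs1 Hs2 Ht1 Ht2 erefl erefl erefl erefl).
    apply: H; exact/(Ltrans B zs (fun n => List.In n ws) gam v c s1 s2 t1 t2 _ _ _ _ Hz Hgam Hws Hs1 Hs2 Ht1 Ht2 erefl erefl erefl erefl).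
  + move=> Hall B HB v Hv Ht.
    have Hh := hv_hom _ _ _ _ Hf0 Hpv B v HB Hv.
    have E : forall u, vars_in ar (fun n => List.In n ws) u -> eval ar B v u = hv V ws pi f0 B v (qcl TermAlg th u).
      by move=> u Hu; rewrite (hv_cl_ws _ _ _ _ Hf0 Hpv).
    have Hcg : Cg ar A (qcl TermAlg th t1) (qcl TermAlg th t2) (qcl TermAlg th s1) (qcl TermAlg th s2).
      apply: (proj2 Hb) => B' h HB' Hh' c Hgm.
      pose v2 := fun n => h (qcl TermAlg th (Var ar n)).
      have E2 : forall u, eval ar B' v2 u = h (qcl TermAlg th u) by move=> u; exact: evh.
      apply/(Ltrans B' zs (fun n => List.In n ws) phi v2 c s1 s2 t1 t2 _ _ _ _ Hz Hphi Hws Hs1 Hs2 Ht1 Ht2 (E2 _) (E2 _) (E2 _) (E2 _)).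
      apply: (Hall B' HB' v2 (pi_h _ _ _ _ _ _ Hh') c).
      exact/(Ltrans B' zs (fun n => List.In n ws) gam v2 c s1 s2 t1 t2 _ _ _ _ Hz Hgam Hws Hs1 Hs2 Ht1 Ht2 (E2 _) (E2 _) (E2 _) (E2 _)).
    have := Hcg _ (kernel_cong _ _ _ Hh).
    rewrite /sat_eq /= -!E //; exact.
- move=> sg [Hsg1 Hsg2]; split; last by move=> H B HB v Hv _; exact: H.
  move=> Hg B HB v Hv.
  case: Ha => C [e [HC [He Hinj] [c Hc]]].
  pose v2 := fun n => e (qcl TermAlg th (Var ar n)).
  have E2 : forall u, eval ar C v2 u = e (qcl TermAlg th u) by move=> u; exact: evh.
  have Hup : forall n, List.In n ws -> update ar C v2 c zs n = v2 n by exact: upd_agree.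
  have Hpi2 : sat_conj ar C (update ar C v2 c zs) pi.
    apply: (sat_agree C (fun n => List.In n ws) v2) => //.
      by move=> n Hn; symmetry; exact: Hup.
    exact: pi_h.
  have Hgm2 := proj2 (Ltrans C zs (fun n => List.In n ws) gam v2 c s1 s2 t1 t2 _ _ _ _ Hz Hgam Hws Hs1 Hs2 Ht1 Ht2 (E2 _) (E2 _) (E2 _) (E2 _)) Hc.
  have := Hg C HC _ Hpi2 Hgm2.
  rewrite /sat_eq (eval_agree C _ _ v2 _ Hsg1 Hup) (eval_agree C _ _ v2 _ Hsg2 Hup) !E2 => /Hinj.
  move=> /(qcl_eq _ _ thC) H.
  have := H B HB (adj ws f0 B v) (fun n Hn => adj_ok _ _ Hf0 B v n Hn) (adj_pi _ _ _ Hpv B v Hv).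
  rewrite /sat_eq (eval_agree B (fun n => List.In n ws) (adj ws f0 B v) v _ Hsg1) ?(eval_agree B (fun n => List.In n ws) (adj ws f0 B v) v _ Hsg2) //.
  all: by move=> n Hn; exact: adj_agree.
Qed.
End Gen.

Theorem proposition5p5 (F : Type) (ar : F -> nat)
    (has_const : exists f : F, ar f = 0) (V : variety ar) :
  guarded_deduction_theorem ar V <-> semantic_condition ar V.
Proof.
case: has_const => f0 Hf0; split; [exact: dir12 | exact: dir21 Hf0].
Qed.
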